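(* Let $\alpha>0$, $\alpha\neq1$. For every unitary $U\in\mathcal{U}(d)$ and all Clifford unitaries $C_1,C_2\in\mathcal{C}_n(d_L)$, $H_\alpha(C_1UC_2)=H_\alpha(U)$.
   Context: Let $d_L\ge 2$, $n\ge1$, $d=d_L^n$. On $\mathbb{C}^{d_L}$ with computational basis $\{|k\rangle\}_{k\in\mathbb{Z}_{d_L}}$, let $Z|k\rangle=\omega^k|k\rangle$, $X|k\rangle=|k+1\rangle$ (mod $d_L$), $\omega=e^{2\pi i/d_L}$, $\tau=-e^{i\pi/d_L}$, $D_{(a_1,a_2)}=\tau^{a_1a_2}X^{a_1}Z^{a_2}$, and for $\mathbf a=\mathbf a_1\oplus\cdots\oplus\mathbf a_n\in\mathbb{Z}_{d_L}^{2n}$ let $D_{\mathbf a}=D_{\mathbf a_1}\otimes\cdots\otimes D_{\mathbf a_n}$ acting on $\mathbb{C}^d$. The Clifford group $\mathcal{C}_n(d_L)$ is the set of unitaries $C$ on $\mathbb{C}^d$ such that for every $\mathbf a$ there exist $s\in\mathbb{Z}_{d_L}$ and $\mathbf a'$ with $CD_{\mathbf a}C^\dagger=\omega^sD_{\mathbf a'}$. For a unitary $U$ let $\mathfrak{C}_{\mathbf{ab}}(U)=\frac1d\operatorname{tr}(D_{\mathbf a}^\dagger UD_{\mathbf b}U^\dagger)$, $\mathfrak{D}_{\mathbf{ab}}(U)=|\mathfrak{C}_{\mathbf{ab}}(U)|^2$, and $H_\alpha(U)=\frac{1}{\alpha-1}\Big(1-\frac{1}{d^2}\sum_{\mathbf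 a,\mathbf b}\mathfrak{D}_{\mathbf{ab}}(U)^\alpha\Big)$. *)

(* Defs.v *)
From HB Require Import structures.
From mathcomp Require Import all_boot all_order all_algebra.
From mathcomp Require Import all_classical all_reals.
From mathcomp Require Import exp trigo.
From mathcomp Require Import complex mxtens.

Set Implicit Arguments.
Unset Strict Implicit.
Unset Printing Implicit Defensive.

Import Order.TTheory GRing.Theory Num.Theory.
Local Open Scope ring_scope.
Local Open Scope complex_scope.

Section Weyl.
Variable R : realType.
Local Notation C := R[i].
Variable dL : nat.

Definition omega : C := cos (2 * pi / dL%:R) +i* sin (2 * pi / dL%:R).
Definition tau : C := - (cos (pi / dL%:R) +i* sin (pi / dL%:R)).

Definition Zmx : 'M[C]_dL := \matrix_(i, j) ((i == j)%:R * omega ^+ i).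
Definition Xmx : 'M[C]_dL := \matrix_(i, j) ((i == (j.+1 %% dL)%N :> nat)%:R).

Definition mxpow {m} (A : 'M[C]_m) (k : nat) : 'M[C]_m := iter k (mulmx A) 1%:M.

Definition D1 (a : 'I_dL * 'I_dL) : 'M[C]_dL :=
  tau ^+ (a.1 * a.2) *: (mxpow Xmx a.1 *m mxpow Zmx a.2).

Fixpoint tensn (f : nat -> 'M[C]_dL) (k : nat) : 'M[C]_(dL ^ k) :=
  match k with
  | 0 => 1%:M
  | k'.+1 => castmx (esym (expnSr dL k'), esym (expnSr dL k'))
                    (tensn f k' *t f k')
  end.

Variable n : nat.

(* a = a_1 (+) ... (+) a_n in Z_dL^{2n} *)
Definition pidx := {ffun 'I_n -> 'I_dL * 'I_dL}.

Definition Dop (a : pidx) : 'M[C]_(dL ^ n) :=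
  tensn (fun k => match insub k with Some i => D1 (a i) | None => 1%:M end) n.

Definition adj {m} (A : 'M[C]_m) : 'M[C]_m := (map_mx conjc A)^T.

Definition unitary (U : 'M[C]_(dL ^ n)) : Prop := U *m adj U = 1%:M.

Definition clifford (Cl : 'M[C]_(dL ^ n)) : Prop :=
  unitary Cl /\
  forall a : pidx, exists (s : 'I_dL) (a' : pidx),
    Cl *m Dop a *m adj Cl = omega ^+ s *: Dop a'.

Definition fC (U : 'M[C]_(dL ^ n)) (a b : pidx) : C :=
  (dL ^ n)%:R^-1 * \tr (adj (Dop a) *m U *m Dop b *m adj U).

Definition fD (U : 'M[C]_(dL ^ n)) (a b : pidx) : R := (complex.Re `|fC U a b|) ^+ 2.

Definition Halpha (alpha : R) (U : 'M[C]_(dL ^ n)) : R :=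
  (alpha - 1)^-1 *
  (1 - ((dL ^ n)%:R ^+ 2)^-1 * \sum_(a : pidx) \sum_(b : pidx) fD U a b `^ alpha).

End Weyl.

(* Main.v *)
Require Import Defs.
From HB Require Import structures.
From mathcomp Require Import all_boot all_order all_algebra.
From mathcomp Require Import all_classical all_reals.
From mathcomp Require Import exp trigo.
From mathcomp Require Import complex mxtens.
From mathcomp Require Import ring lra.
Import Order.TTheory GRing.Theory Num.Theory.
Local Open Scope ring_scope.
Local Open Scope complex_scope.

Lemma adjcM (R : realType) m (A B : 'M[R[i]]_m) : adj (A *m B) = adj B *m adj A.
Proof. by rewrite /adj map_mxM trmx_mul. Qed.

Lemma adjcZ (R : realType) m (c : R[i]) (A : 'M[R[i]]_m) : adj (c *: A) = c^* *: adj A.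
Proof. by rewrite /adj map_mxZ; apply/matrixP=> i j; rewrite !mxE. Qed.

Lemma adjcK (R : realType) m (A : 'M[R[i]]_m) : adj (adj A) = A.
Proof. by rewrite /adj map_trmx trmxK -map_mx_comp map_mx_id // => x /=; rewrite conjcK. Qed.

Lemma unitaryC (R : realType) dL n (U : 'M[R[i]]_(dL ^ n)) : unitary U -> adj U *m U = 1%:M.
Proof. by move=> h; apply: mulmx1C. Qed.

Lemma mxpowX (R : realType) dL (hd : (0 < dL)%N) k (i j : 'I_dL) :
  mxpow (@Xmx R dL) k i j = (i == (j + k) %% dL :> nat)%N%:R.
Proof.
elim: k i => [|k IH] i.
  by rewrite /= mxE addn0 modn_small.
rewrite /= mxE (bigD1 (Ordinal (ltn_pmod (j + k) hd))) //= big1 ?addr0.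
  by rewrite IH mxE /= eqxx mulr1 -addn1 modnDml addn1 addnS.
move=> l hl; rewrite IH mxE.
by move: hl; rewrite -val_eqE /= => /negbTE ->; rewrite mulr0.
Qed.

Lemma mxpowZ (R : realType) dL k (i j : 'I_dL) :
  mxpow (@Zmx R dL) k i j = (i == j)%:R * omega R dL ^+ (i * k)%N.
Proof.
elim: k i => [|k IH] i.
  by rewrite /= mxE muln0 expr0 mulr1.
rewrite /= mxE (bigD1 i) //= big1 ?addr0.
  rewrite IH mxE eqxx mul1r; case: eqP => _; rewrite ?mul0r ?mulr0 ?mul1r //.
  by rewrite mulnS exprD.
move=> l hl; rewrite mxE eq_sym (negbTE hl) !mul0r //.
Qed.

Lemma mxpowXZ (R : realType) dL (hd : (0 < dL)%N) a b (i j : 'I_dL) :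
  (mxpow (@Xmx R dL) a *m mxpow (@Zmx R dL) b) i j
    = (i == (j + a) %% dL :> nat)%N%:R * omega R dL ^+ (j * b)%N.
Proof.
rewrite mxE (bigD1 j) //= big1 ?addr0.
  by rewrite mxpowX // mxpowZ eqxx mul1r.
move=> l hl; rewrite mxpowZ (negbTE hl) mul0r mulr0 //.
Qed.

Definition ex {R : realType} (t : R) : R[i] := cos t +i* sin t.

Lemma exD (R : realType) (a b : R) : ex a * ex b = ex (a + b).
Proof.
rewrite /ex cosD sinD; apply/eqP; rewrite eq_complex /=; apply/andP; split; apply/eqP.
  by [].
by rewrite addrC.
Qed.

Lemma exX (R : realType) (a : R) k : ex a ^+ k = ex (a *+ k).
Proof.
elim: k => [|k IH]; first by rewrite expr0 mulr0n /ex cos0 sin0.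
by rewrite exprS IH exD mulrS.
Qed.

Lemma normex (R : realType) (a : R) : `|ex a| = 1.
Proof. by rewrite normc_def /= cos2Dsin2 sqrtr1. Qed.

Lemma omegaE (R : realType) dL : omega R dL = ex (2 * pi / dL%:R).
Proof. by []. Qed.

Lemma norm_omega (R : realType) dL : `|omega R dL| = 1.
Proof. exact: normex. Qed.

Lemma omega_neq0 (R : realType) dL : omega R dL != 0.
Proof. by rewrite -normr_eq0 norm_omega oner_eq0. Qed.

Lemma tau_neq0 (R : realType) dL : tau R dL != 0.
Proof.
rewrite /tau oppr_eq0 -normr_eq0.
have -> : (cos (pi / dL%:R) +i* sin (pi / dL%:R)) = ex (pi / dL%:R :> R) by [].
by rewrite normex oner_eq0.
Qed.

Lemma omega_prim (R : realType) dL k : (0 < k < dL)%N -> omega R dL ^+ k != 1.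
Proof.
move=> /andP[k0 kd].
have dL0 : (0 < dL)%N by apply: leq_trans kd.
set y : R := (pi / dL%:R) *+ k.
have hy : 0 < y < pi.
  apply/andP; split.
    by rewrite /y pmulrn_rgt0 // divr_gt0 ?pi_gt0 ?ltr0n.
  have -> : y = pi * (k%:R / dL%:R) by rewrite /y -mulr_natr; ring.
  rewrite gtr_pMr ?pi_gt0 // ltr_pdivrMr ?ltr0n //.
  by rewrite mul1r ltr_nat.
rewrite omegaE exX.
have key : forall (p d : R) (m : nat), (2 * p / d) *+ m = (p / d *+ m) *+ 2.
  by move=> p d m; rewrite -mulrnA mulnC mulrnA mulr2n; congr (_ *+ m); ring.
rewrite key -/y.
have h1 : (1 : R[i]) = 1 +i* 0 by [].
rewrite h1 /ex eq_complex negb_and; apply/orP; left.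
rewrite cos_mulr2n /=.
have hs := sin_gt0_pi hy; have hcs := cos2Dsin2 y.
apply/negP => /eqP h.
rewrite mulr2n in h.
nra.
Qed.

Lemma nz_entry {K : fieldType} m n (A : 'M[K]_(m, n)) :
  A != 0 -> exists i j, A i j != 0.
Proof.
move=> hA; case: (pickP (fun ij : 'I_m * 'I_n => A ij.1 ij.2 != 0)) => [[i j] h|h].
  by exists i, j.
move/eqP: hA; case; apply/matrixP => i j; rewrite mxE.
by move: (h (i, j)) => /= /negbFE /eqP.
Qed.

Lemma tens_nz {K : fieldType} m1 n1 m2 n2 (A : 'M[K]_(m1, n1)) (B : 'M[K]_(m2, n2)) :
  A != 0 -> B != 0 -> A *t B != 0.
Proof.
move=> /nz_entry [i [j hA]] /nz_entry [k [l hB]].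
apply/eqP => /matrixP /(_ (mxtens_index (i, k)) (mxtens_index (j, l))).
by rewrite tensmxE mxE => /eqP; rewrite mulf_eq0 (negbTE hA) (negbTE hB).
Qed.

Lemma tens_propR {K : fieldType} m1 n1 m2 n2 (A A' : 'M[K]_(m1, n1))
  (B B' : 'M[K]_(m2, n2)) mu :
  A *t B = mu *: (A' *t B') -> A != 0 -> exists nu, B = nu *: B'.
Proof.
move=> e /nz_entry [i [j hA]].
exists (mu * A' i j / A i j); apply/matrixP => k l.
move/matrixP: e => /(_ (mxtens_index (i, k)) (mxtens_index (j, l))).
rewrite tensmxE mxE tensmxE => e.
apply: (mulfI hA); rewrite e mxE; field; exact: hA.
Qed.

Lemma tens_propL {K : fieldType} m1 n1 m2 n2 (A A' : 'M[K]_(m1, n1))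
  (B B' : 'M[K]_(m2, n2)) mu :
  A *t B = mu *: (A' *t B') -> B != 0 -> exists nu, A = nu *: A'.
Proof.
move=> e /nz_entry [k [l hB]].
exists (mu * B' k l / B k l); apply/matrixP => i j.
move/matrixP: e => /(_ (mxtens_index (i, k)) (mxtens_index (j, l))).
rewrite tensmxE mxE tensmxE => e.
apply: (mulIf hB); rewrite e mxE; field; exact: hB.
Qed.

Arguments tens_propR {K m1 n1 m2 n2 A A' B B' mu}.
Arguments tens_propL {K m1 n1 m2 n2 A A' B B' mu}.
Arguments tens_nz {K m1 n1 m2 n2 A B}.

Lemma castmxZ {K : fieldType} m1 n1 m2 n2 (e : (m1 = m2) * (n1 = n2)) (c : K) (A : 'M[K]_(m1, n1)) :
  castmx e (c *: A) = c *: castmx e A.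
Proof. by apply/matrixP => i j; rewrite castmxE !mxE castmxE. Qed.

Lemma castmx_nz {K : fieldType} m1 n1 m2 n2 (e : (m1 = m2) * (n1 = n2)) (A : 'M[K]_(m1, n1)) :
  A != 0 -> castmx e A != 0.
Proof.
case: e => e1 e2 hA; apply/eqP => h; move/eqP: hA; apply.
by rewrite -(castmxK e1 e2 A) h; apply/matrixP => i j; rewrite castmxE !mxE.
Qed.

Arguments castmx_nz {K m1 n1 m2 n2} e {A}.

Lemma tensn_nz (R : realType) dL (f : nat -> 'M[R[i]]_dL) k :
  (forall i, (i < k)%N -> f i != 0) -> tensn f k != 0.
Proof.
elim: k => [|k IH] h /=.
  by apply/eqP => /matrixP /(_ ord0 ord0); rewrite !mxE /= => /eqP; rewrite oner_eq0.
apply: castmx_nz; apply: tens_nz; last by apply: h.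
by apply: IH => i hi; apply: h; apply: ltnW.
Qed.

Lemma tensn_prop (R : realType) dL (f g : nat -> 'M[R[i]]_dL) k mu :
  (forall i, (i < k)%N -> f i != 0) -> tensn f k = mu *: tensn g k ->
  forall i, (i < k)%N -> exists nu, f i = nu *: g i.
Proof.
elim: k mu => [|k IH] mu h e i hi //=.
move: e => /= e.
have e' : tensn f k *t f k = mu *: (tensn g k *t g k).
  by rewrite -[LHS](castmxK (esym (expnSr dL k)) (esym (expnSr dL k))) e castmxZ castmxK.
rewrite ltnS leq_eqVlt in hi; case/orP: hi => [/eqP ->|hi].
  have [|nu enu] := tens_propR e'; last by exists nu.
  by apply: tensn_nz => j hj; apply: h; apply: ltnW.
have [nu enu] := tens_propL e' (h k (ltnSn k)).
by apply: (IH nu) => // j hj; apply: h; apply: ltnW.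
Qed.

Lemma D1E (R : realType) dL (hd : (0 < dL)%N) (a : 'I_dL * 'I_dL) (i j : 'I_dL) :
  D1 R a i j = tau R dL ^+ (a.1 * a.2)%N * ((i == (j + a.1) %% dL :> nat)%N%:R * omega R dL ^+ (j * a.2)%N).
Proof. by rewrite /D1 mxE mxpowXZ. Qed.

Lemma D1_nz (R : realType) dL (hd : (0 < dL)%N) a : D1 R a != 0 :> 'M_dL.
Proof.
apply/eqP => /matrixP /(_ a.1 (Ordinal hd)); rewrite D1E // mxE /= add0n modn_small //.
rewrite eqxx mul0n expr0 !mulr1 => /eqP; rewrite expf_eq0 (negbTE (tau_neq0 _ _)) andbF //.
Qed.

Lemma omega_inj (R : realType) dL (a b : nat) : (a < dL)%N -> (b < dL)%N ->
  omega R dL ^+ a = omega R dL ^+ b -> a = b.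
Proof.
wlog hab : a b / (a <= b)%N.
  move=> H ha hb e; case: (leqP a b) => h; first exact: H.
  by apply/esym/H => //; apply: ltnW.
move=> ha hb e; apply/eqP; rewrite eqn_leq hab /= leqNgt; apply/negP => lt.
have := @omega_prim R dL (b - a)%N.
rewrite subn_gt0 lt /= (leq_ltn_trans (leq_subr _ _) hb) => /(_ isT) /eqP; apply.
apply: (mulfI (expf_neq0 a (omega_neq0 R dL))).
by rewrite -exprD subnKC // mulr1.
Qed.

Lemma D1_prop (R : realType) dL (hd : (1 < dL)%N) (a b : 'I_dL * 'I_dL) nu :
  D1 R a = nu *: D1 R b -> a = b.
Proof.
have hd0 : (0 < dL)%N by apply: ltnW.
move=> /matrixP e.
have e0 := e a.1 (Ordinal hd0).
rewrite D1E // mxE D1E //= !add0n !modn_small // mul0n expr0 !mulr1 eqxx mulr1 in e0.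
have e01 : a.1 = b.1.
  apply/val_inj/eqP; apply/negPn/negP => hne.
  move/eqP: e0; rewrite (negbTE hne) /= mulr0 mulr0 expf_eq0 (negbTE (tau_neq0 _ _)) andbF //.
rewrite -e01 eqxx /= mulr1 in e0.
have hi1 : ((1 + a.1) %% dL < dL)%N by apply: ltn_pmod.
have e1 := e (Ordinal hi1) (Ordinal hd).
rewrite D1E // mxE D1E //= -e01 eqxx /= !mul1r !mul1n in e1.
have e2 : omega R dL ^+ a.2 = omega R dL ^+ b.2.
  apply: (mulfI (expf_neq0 (a.1 * a.2)%N (tau_neq0 R dL))).
  by rewrite e1 e0 mulrA.
have /val_inj e3 := @omega_inj R dL _ _ (ltn_ord _) (ltn_ord _) e2.
by case: a b e01 e3 {e e0 e1 e2 hi1} => [? ?] [? ?] /= -> ->.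
Qed.

Lemma Dop_prop (R : realType) dL n (hd : (1 < dL)%N) (a b : pidx dL n) mu :
  Dop R a = mu *: Dop R b -> a = b.
Proof.
have hd0 : (0 < dL)%N by apply: ltnW.
rewrite /Dop => e.
have := fun hP => @tensn_prop R dL _ _ n mu hP e.
match goal with |- (forall _ : ?P, _) -> _ => have hP : P end.
  move=> k _; case: insubP => [u _ _|_]; first exact: D1_nz.
  apply/eqP => /matrixP /(_ (Ordinal hd0) (Ordinal hd0)); rewrite !mxE eqxx /= => /eqP.
  by rewrite oner_eq0.
move=> /(_ hP) H; apply/ffunP => i.
have [nu h] := H i (ltn_ord i).
rewrite valK in h.
exact: D1_prop h.
Qed.

Lemma cliff_fun (R : realType) dL n (hd : (1 < dL)%N) (C : 'M[R[i]]_(dL ^ n)) :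
  clifford C -> exists (s : pidx dL n -> 'I_dL) (phi : pidx dL n -> pidx dL n),
    injective phi /\ adj C *m C = 1%:M /\
    forall a, C *m Dop R a *m adj C = omega R dL ^+ s a *: Dop R (phi a).
Proof.
case=> hu hc.
have hu' : adj C *m C = 1%:M by apply: mulmx1C.
have [f hf] := choice (fun a => let: ex_intro s (ex_intro a' h) := hc a in
   ex_intro (fun p : 'I_dL * pidx dL n =>
      C *m Dop R a *m adj C = omega R dL ^+ p.1 *: Dop R p.2) (s, a') h).
exists (fun a => (f a).1), (fun a => (f a).2); split; last by split.
move=> a1 a2 e.
have back : forall X, adj C *m (C *m X *m adj C) *m C = X.
  by move=> X; rewrite !mulmxA hu' mul1mx -mulmxA hu' mulmx1.
have e1 := hf a1; have e2 := hf a2.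
have h1 := back (Dop R a1); have h2 := back (Dop R a2).
rewrite e1 e in h1; rewrite e2 in h2.
apply: (@Dop_prop R dL n hd _ _ (omega R dL ^+ (f a1).1 / omega R dL ^+ (f a2).1)).
rewrite -h1 -h2 -!scalemxAr -!scalemxAl scalerA mulfVK //.
exact: expf_neq0 (omega_neq0 R dL).
Qed.

Lemma key_fC (R : realType) dL n (C1 C2 U : 'M[R[i]]_(dL ^ n)) (a a' b b' : pidx dL n) c c' :
  adj C1 *m C1 = 1%:M -> c != 0 ->
  C1 *m Dop R a *m adj C1 = c *: Dop R a' ->
  C2 *m Dop R b *m adj C2 = c' *: Dop R b' ->
  fC (C1 *m U *m C2) a' b = (c^-1)^* * c' * fC U a b'.
Proof.
move=> hC1 hc ea eb.
have ea' : Dop R a' = c^-1 *: (C1 *m Dop R a *m adj C1) by rewrite ea scalerA mulVf // scale1r.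
rewrite /fC ea' adjcZ !adjcM adjcK.
rewrite -!scalemxAl mxtraceZ.
have -> : C1 *m (adj (Dop R a) *m adj C1) *m (C1 *m U *m C2) *m Dop R b *m (adj C2 *m (adj U *m adj C1))
   = C1 *m (adj (Dop R a) *m U *m (c' *: Dop R b') *m adj U) *m adj C1.
  rewrite !mulmxA -(mulmxA (C1 *m adj (Dop R a))) hC1 mulmx1.
  by rewrite -eb !mulmxA.
rewrite (mxtrace_mulC (C1 *m _) (adj C1)) (mulmxA (adj C1)) hC1 mul1mx -scalemxAr -scalemxAl mxtraceZ.
ring.
Qed.

Lemma norm_fac (R : realType) dL (z : R[i]) k l :
  `|(omega R dL ^+ k)^-1^* * omega R dL ^+ l * z| = `|z|.
Proof.
by rewrite normrM [`|_ * _|]normrM normcJ normfV !normrX norm_omega !expr1n invr1 !mul1r.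
Qed.

Lemma sum_reindex2 (I : finType) (R : realType) (F G : I -> I -> R) (h k : I -> I) :
  injective h -> injective k -> (forall a b, F (h a) b = G a (k b)) ->
  \sum_a \sum_b F a b = \sum_a \sum_b G a b.
Proof.
move=> ih ik e; rewrite (reindex_inj ih); apply: eq_bigr => a _.
by rewrite [RHS](reindex_inj ik); apply: eq_bigr => b _.
Qed.

Local Close Scope complex_scope.

Theorem theorem2 (R : realType) (dL n : nat) (hdL : (2 <= dL)%N) (hn : (1 <= n)%N)
  (alpha : R) (halpha : 0 < alpha) (halpha1 : alpha != 1)
  (U C1 C2 : 'M[R[i]]_(dL ^ n)) :
  unitary U -> clifford C1 -> clifford C2 ->
  Halpha alpha (C1 *m U *m C2) = Halpha alpha U.
Proof.
move=> hU hc1 hc2.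
have [s1 [phi1 [inj1 [hC1 e1]]]] := @cliff_fun R dL n hdL C1 hc1.
have [s2 [phi2 [inj2 [_ e2]]]] := @cliff_fun R dL n hdL C2 hc2.
have hfD : forall a b, fD (C1 *m U *m C2) (phi1 a) b = fD U a (phi2 b).
  move=> a b; rewrite /fD (@key_fC R dL n C1 C2 U _ _ _ _ _ _ hC1 _ (e1 a) (e2 b)); last first.
    exact: expf_neq0 (omega_neq0 R dL).
  by rewrite (norm_fac R dL (fC U a (phi2 b)) (s1 a) (s2 b)).
rewrite /Halpha.
apply: (congr1 (fun S => (alpha - 1)^-1 * (1 - ((dL ^ n)%:R ^+ 2)^-1 * S))).
apply: (@sum_reindex2 {ffun 'I_n -> 'I_dL * 'I_dL} R (fun a b => fD (C1 *m U *m C2) a b `^ alpha) (fun a b => fD U a b `^ alpha) phi1 phi2 inj1 inj2).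
by move=> a b; rewrite hfD.
Qed.
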